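(* Let $d\ge 2$ and $k$ be positive integers. There exists a unique subset $\mathcal{X}$ of $\mathbb{P}^d_\circ$ such that $|\mathcal{X}|=\delta_z(d,k)$ and $\kappa(\mathcal{X})\le k$ if and only if $k=\kappa(B(d,p)\cap\mathbb{P}^d_\circ)$ for some positive integer $p$.
   Context: A point of $\mathbb{Z}^d$ is primitive if its coordinates are relatively prime; $\mathbb{P}^d_\circ$ denotes the set of primitive points of $\mathbb{Z}^d$ whose first non-zero coordinate is positive. $B(d,p)=\{x\in\mathbb{R}^d:\|x\|_1\le p\}$. For a finite $\mathcal{X}\subset\mathbb{R}^d$, $\kappa(\mathcal{X})=\max_{1\le i\le d}\sum_{x\in\mathcal{X}}|x_i|$, and $\delta_z(d,k)=\max\{|\mathcal{X}|:\mathcal{X}\subset\mathbb{P}^d_\circ,\ \kappa(\mathcal{X})\le k\}$. *)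

(* Defs.v *)
From HB Require Import structures.
From mathcomp Require Import all_boot all_order all_algebra.
From mathcomp Require Import finmap.
Set Implicit Arguments. Unset Strict Implicit. Unset Printing Implicit Defensive.
Import Order.TTheory GRing.Theory Num.Theory.
Local Open Scope fset_scope.
Local Open Scope ring_scope.

Definition pt (d : nat) := {ffun 'I_d -> int}.

Definition primitive (d : nat) (x : pt d) : bool :=
  (\big[gcdn/0%N]_(i < d) `|x i|%N == 1)%N.

Definition first_nz_pos (d : nat) (x : pt d) : bool :=
  [exists i : 'I_d, (0 < x i) && [forall j : 'I_d, (j < i)%N ==> (x j == 0)]].

Definition inPcirc (d : nat) (x : pt d) : bool := primitive x && first_nz_pos x.

Definition l1 (d : nat) (x : pt d) : int := \sum_(i < d) `|x i|.

Definition kappa (d : nat) (X : {fset pt d}) : int :=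
  \big[Num.max/0]_(i < d) \sum_(x <- X) `|x i|.

Definition box (d m : nat) : {fset pt d} :=
  seq_fset tt [seq [ffun i => (nat_of_ord (f i))%:Z - m%:Z] | f : {ffun 'I_d -> 'I_(m.*2).+1} <- enum {ffun 'I_d -> 'I_(m.*2).+1}].

(* B(d,p) \cap P^d_circ (every such point lies in the box [-p,p]^d) *)
Definition BP (d p : nat) : {fset pt d} :=
  [fset x in box d p | inPcirc x && (l1 x <= p%:Z)].

Definition admissible (d k : nat) (X : {fset pt d}) : Prop :=
  (forall x, x \in X -> inPcirc x) /\ kappa X <= k%:Z.

Definition admissibleb (d k : nat) (X : {fset pt d}) : bool :=
  all (@inPcirc d) X && (kappa X <= k%:Z).

(* Every admissible X
   satisfies |x_i| <= kappa(X) <= k for x in X, hence X is a subset of the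
   box [-k,k]^d, so the maximum may be taken over subsets of that box. *)
Definition delta_z (d k : nat) : nat :=
  (\max_(S <- fpowerset (box d k) | admissibleb k S) #|` S|)%N.

(* Main.v *)
Require Import Defs.
From HB Require Import structures.
From mathcomp Require Import all_boot all_order all_algebra.
From mathcomp Require Import all_fingroup zify.
From mathcomp Require Import finmap.
Set Implicit Arguments. Unset Strict Implicit. Unset Printing Implicit Defensive.
Import Order.TTheory GRing.Theory Num.Theory.
Local Open Scope fset_scope.
Local Open Scope ring_scope.

Lemma box_mem d m (x : pt d) : (x \in box d m) <-> (forall i, `|x i| <= m%:Z).
Proof.
rewrite /box seq_fsetE; split.
  case/mapP => f _ -> i; rewrite ffunE.
  have := ltn_ord (f i); move: (nat_of_ord (f i)) => a ha.
  lia.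
move=> H; apply/mapP.
have hlt : forall i, (absz ((x i + m%:Z)%R) < (m.*2).+1)%N.
  move=> i; have := H i; lia.
exists [ffun i => Ordinal (hlt i)]; first by rewrite mem_enum.
apply/ffunP => i; rewrite !ffunE /=.
have := H i; lia.
Qed.

Section Sym.
Variable d : nat.
Implicit Types (x y z : pt d) (X Y U V : {fset pt d}).

Definition cs X (i : 'I_d) : int := \sum_(x <- X) `|x i|.

Lemma cs_ge0 X i : 0 <= cs X i.
Proof. by apply: sumr_ge0 => x _; exact: normr_ge0. Qed.

Lemma cs_le_kappa X i : cs X i <= kappa X.
Proof.
rewrite /kappa (bigD1 i) //=; by rewrite le_max lexx.
Qed.

Lemma kappa_le X m : (forall i, cs X i <= m) -> 0 <= m -> kappa X <= m.
Proof.
move=> H m0; rewrite /kappa; elim/big_ind: _ => //.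
by move=> a b ha hb; rewrite ge_max ha hb.
by move=> i _; apply: H.
Qed.

Lemma kappa_ge0 X : 0 <= kappa X.
Proof.
rewrite /kappa; elim/big_ind: _ => //.
by move=> a b ha hb; rewrite le_max ha.
by move=> i _; exact: cs_ge0.
Qed.

Lemma max_seq_attained (T : eqType) (r : seq T) (P : pred T) (F : T -> nat) :
  (\max_(i <- r | P i) F i)%N = 0%N \/
  exists2 i, i \in r & P i /\ (\max_(i <- r | P i) F i)%N = F i.
Proof.
elim: r => [|a r IH]; first by left; rewrite big_nil.
rewrite big_cons; case: ifP => Pa; last first.
  case: IH => [->|[i ir [Pi ->]]]; [by left | right; exists i => //].
  by rewrite inE ir orbT.
case: IH => [->|[i ir [Pi ->]]].
  by right; exists a; rewrite ?inE ?eqxx //; split => //; rewrite maxn0.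
right; case: (leqP (F i) (F a)) => h.
  by exists a; rewrite ?inE ?eqxx //; split => //; apply/maxn_idPl.
by exists i; rewrite ?inE ?ir ?orbT //; split => //; apply/maxn_idPr/ltnW.
Qed.

Lemma admissibleP k X : admissible k X <-> admissibleb k X.
Proof.
rewrite /admissible /admissibleb; split.
  by case=> H1 H2; rewrite H2 andbT; apply/allP => x /H1.
by case/andP => /allP H1 H2; split.
Qed.

Lemma adm_box k X x : admissible k X -> x \in X -> x \in box d k.
Proof.
case=> _ hk xX; apply/box_mem => i.
apply: le_trans (le_trans (cs_le_kappa X i) hk).
rewrite /cs (big_fsetD1 x xX) /=; rewrite lerDl; apply: sumr_ge0 => ? _.
exact: normr_ge0.
Qed.

Lemma le_delta k X : admissible k X -> (#|` X| <= delta_z d k)%N.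
Proof.
move=> hX; rewrite /delta_z; apply: (@leq_bigmax_seq _ (enum_fset (fpowerset (box d k))) _ (fun S => #|` S|)).
  by rewrite fpowersetE; apply/fsubsetP => x; apply: adm_box.
by apply/admissibleP.
Qed.

Lemma delta_attained k : exists X, admissible k X /\ #|` X| = delta_z d k.
Proof.
rewrite /delta_z; case: (max_seq_attained (enum_fset (fpowerset (box d k))) (admissibleb k) (fun S => #|` S|)) => [->|[S _ [HS ->]]].
  exists fset0; split; last by rewrite cardfs0.
  split => [x|]; first by rewrite in_fset0.
  by rewrite /kappa; elim/big_ind: _ => //; [move=> a b ha hb; rewrite ge_max ha hb
    | move=> i _; rewrite /cs big_seq_fset0].
by exists S; split => //; apply/admissibleP.
Qed.

Definition negp x : pt d := [ffun i => - x i].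
Definition nf x : pt d := if first_nz_pos x then x else negp x.
Definition tw (s : 'I_d -> bool) (p : {perm 'I_d}) x : pt d :=
  [ffun i => if s i then - x (p i) else x (p i)].
Definition phi s p x := nf (tw s p x).

Lemma phi_cases s p x : phi s p x = tw s p x \/ phi s p x = negp (tw s p x).
Proof. by rewrite /phi /nf; case: ifP; [left|right]. Qed.

Lemma abs_phi s p x i : `|phi s p x i| = `|x (p i)|.
Proof.
by case: (phi_cases s p x) => ->; rewrite !ffunE; case: (s i); rewrite ?normrN.
Qed.

Lemma l1_phi s p x : l1 (phi s p x) = l1 x.
Proof.
rewrite /l1 [RHS](reindex_inj (@perm_inj _ p)) /=.
by apply: eq_bigr => i _; rewrite abs_phi.
Qed.

Lemma prim_abs (p : {perm 'I_d}) x y : (forall i, `|y i| = `|x (p i)|) -> primitive y = primitive x.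
Proof.
move=> H; rewrite /primitive [X in _ = (X == _)%N](reindex_inj (@perm_inj _ p)) /=.
congr (_ == _)%N; apply: eq_bigr => i _.
by move: (H i); rewrite -!abszE => -[->].
Qed.

Lemma prim_nz x : primitive x -> exists i, x i != 0.
Proof.
move=> hp; apply/existsP; apply: contraLR hp; rewrite negb_exists => /forallP H.
rewrite /primitive big1 // => i _; have := H i; rewrite negbK => /eqP ->.
by [].
Qed.

Lemma fnp_or x : (exists i, x i != 0) -> first_nz_pos x || first_nz_pos (negp x).
Proof.
case=> i0 hi0.
case: (@arg_minnP _ i0 (fun i => x i != 0) (fun i : 'I_d => nat_of_ord i) hi0) => i hi hmin.
have hz : forall j : 'I_d, (j < i)%N -> x j == 0.
  move=> j hj; apply: contraTT hj => hj; rewrite -leqNgt; exact: hmin.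
case: (ltrgtP (x i) 0) => hx.
- apply/orP; right; apply/existsP; exists i; rewrite ffunE oppr_gt0 hx /=.
  by apply/forallP => j; apply/implyP => /hz /eqP; rewrite ffunE => ->; rewrite oppr0.
- apply/orP; left; apply/existsP; exists i; rewrite hx /=.
  by apply/forallP => j; apply/implyP => /hz.
- by move: hi; rewrite hx eqxx.
Qed.

Lemma fnp_neg x : first_nz_pos x -> ~~ first_nz_pos (negp x).
Proof.
case/existsP => i /andP [hi /forallP hj]; apply/negP; case/existsP => i' /andP [hi' /forallP hj'].
move: hi'; rewrite ffunE oppr_gt0 => hi'.
case: (ltngtP i i') => h.
- by move: (hj' i); rewrite h ffunE /= oppr_eq0 => /eqP h0; move: hi; rewrite h0.
- by move: (hj i'); rewrite h /= => /eqP h0; move: hi'; rewrite h0.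
- have e : i = i' by apply: val_inj.
  by move: hi hi'; rewrite e => a b; move: (lt_trans a b); rewrite ltxx.
Qed.

Lemma fnp_nf x : (exists i, x i != 0) -> first_nz_pos (nf x).
Proof. by move=> h; rewrite /nf; case: ifP => // hf; move: (fnp_or h); rewrite hf. Qed.

Lemma inP_phi s p x : inPcirc x -> inPcirc (phi s p x).
Proof.
case/andP => hp _; apply/andP; split.
  by rewrite (prim_abs (p := p) (x := x)) // => i; rewrite abs_phi.
apply: fnp_nf; case: (prim_nz hp) => i hi; exists (p^-1 i)%g.
by rewrite ffunE permKV; case: (s _); rewrite ?oppr_eq0.
Qed.

Lemma tw_inj s p : injective (tw s p).
Proof.
move=> x y e; apply/ffunP => i; have := congr1 (fun f : pt d => f ((p^-1)%g i)) e.
by rewrite !ffunE permKV; case: (s _) => // /eqP; rewrite eqr_opp => /eqP.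
Qed.

Lemma tw_neg s p x : tw s p (negp x) = negp (tw s p x).
Proof. by apply/ffunP => i; rewrite !ffunE; case: (s i). Qed.

Lemma negpK x : negp (negp x) = x.
Proof. by apply/ffunP => i; rewrite !ffunE opprK. Qed.

Lemma phi_inj s p x y : inPcirc x -> inPcirc y -> phi s p x = phi s p y -> x = y.
Proof.
case/andP => _ fx; case/andP => _ fy.
case: (phi_cases s p x) => ->; case: (phi_cases s p y) => -> e.
- exact: tw_inj e.
- move: e; rewrite -tw_neg => /tw_inj e; move: (fnp_neg fy); rewrite -e fx //.
- move: e; rewrite -tw_neg => /tw_inj e; move: (fnp_neg fx); rewrite e fy //.
- by move: e; rewrite -!tw_neg => /tw_inj /(congr1 negp); rewrite !negpK.
Qed.

Definition phiS s p X := [fset phi s p x | x in X].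

Lemma card_phiS s p X : (forall x, x \in X -> inPcirc x) -> #|` phiS s p X| = #|` X|.
Proof.
move=> H; rewrite card_in_imfset //=.
move=> x y hx hy; apply: phi_inj; exact: H.
Qed.

Lemma cs_phiS s p X i : (forall x, x \in X -> inPcirc x) -> cs (phiS s p X) i = cs X (p i).
Proof.
move=> H; rewrite /cs big_imfset /=; last by move=> x y hx hy; apply: phi_inj; exact: H.
by apply: eq_bigr => x _; rewrite abs_phi.
Qed.

Lemma kappa_phiS s p X : (forall x, x \in X -> inPcirc x) -> kappa (phiS s p X) = kappa X.
Proof.
move=> H; rewrite /kappa [RHS](reindex_inj (@perm_inj _ p)) /=.
by apply: eq_bigr => i _; exact: cs_phiS.
Qed.

Lemma adm_phiS k s p X : admissible k X -> admissible k (phiS s p X).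
Proof.
case=> H1 H2; split; last by rewrite kappa_phiS.
by move=> y /imfsetP [x /= hx ->]; apply: inP_phi; apply: H1.
Qed.

Lemma sum_sub (F : pt d -> int) U X : U `<=` X ->
  \sum_(x <- X) F x = \sum_(x <- X `\` U) F x + \sum_(x <- U) F x.
Proof.
move=> hU; rewrite (big_fsetID _ (mem U)) addrC; congr (_ + _).
  apply: eq_fbigl => x; rewrite !inE /=; apply/andP/idP => [[]//|h]; split => //.
  exact: (fsubsetP hU).
by apply: eq_fbigl => x; rewrite !inE andbC.
Qed.

Lemma sum_disj (F : pt d -> int) A B : (forall b, b \in B -> b \notin A) ->
  \sum_(x <- A `|` B) F x = \sum_(x <- A) F x + \sum_(x <- B) F x.
Proof.
move=> hd; rewrite (big_fsetID _ (mem B)) addrC; congr (_ + _).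
  apply: eq_fbigl => x; rewrite !inE /=; apply/andP/idP => [[]//|h]; split => //.
  by rewrite h orbT.
apply: eq_fbigl => x; rewrite !inE /=; apply/andP/idP => [[/orP [//|hb] hnb]|h].
  by rewrite hb in hnb.
split; first by rewrite h.
by apply/negP => hb; move: (hd x hb); rewrite h.
Qed.

Lemma exchange k X U V :
  admissible k X ->
  (forall Y, admissible k Y -> #|` Y| = #|` X| -> Y = X) ->
  U `<=` X -> (forall v, v \in V -> inPcirc v) -> (forall v, v \in V -> v \notin X) ->
  V != fset0 -> #|` U| = #|` V| ->
  (forall i, cs X i - cs U i + cs V i <= k%:Z) -> False.
Proof.
move=> [HX1 HX2] Huniq hU HV1 HV2 HV0 hc hk.
have hd : forall b, b \in V -> b \notin X `\` U.
  by move=> b /HV2 hb; rewrite inE negb_and hb orbT.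
have hY : admissible k ((X `\` U) `|` V).
  split.
    move=> x; rewrite !inE => /orP [/andP [_ /HX1] //|]; exact: HV1.
  apply: kappa_le; last by [].
  move=> i; rewrite /cs sum_disj //; have := hk i; rewrite /cs (sum_sub _ hU) addrK; exact.
have hcard : #|` (X `\` U) `|` V| = #|` X|.
  rewrite cardfsU.
  have -> : (X `\` U) `&` V = fset0.
    apply/eqP; rewrite -fsubset0; apply/fsubsetP => x; rewrite !inE => /andP [h1 h2].
    by move: (hd x h2); rewrite inE h1.
  rewrite cardfs0 subn0 cardfsDS // -hc subnK //.
  by rewrite fsubset_leq_card.
have := Huniq _ hY hcard.
case/fset0Pn: HV0 => v hv e.
by move: (HV2 v hv); rewrite -e !inE hv orbT.
Qed.

Lemma mulrn_le (p a b : nat) : (p.+1)%:Z *+ a <= p%:Z *+ b -> (p.+1 * a <= p * b)%N.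
Proof. rewrite -[(p.+1)%:Z *+ a]mulr_natr -[p%:Z *+ b]mulr_natr !natz -!PoszM lez_nat. by []. Qed.

Lemma sum_const (S : {fset pt d}) (c : int) : \sum_(x <- S) c = c *+ #|` S|.
Proof. by rewrite big_const_seq count_predT iter_addr_0. Qed.

Lemma abs_le_l1 x i : `|x i| <= l1 x.
Proof.
rewrite /l1 (bigD1 i) //= lerDl; apply: sumr_ge0 => ? _; exact: normr_ge0.
Qed.

Lemma l1_ge0 x : 0 <= l1 x.
Proof. apply: sumr_ge0 => ? _; exact: normr_ge0. Qed.

Lemma BP_mem p x : (x \in BP d p) = inPcirc x && (l1 x <= p%:Z).
Proof.
rewrite /BP !inE /=; apply/andP/idP => [[_ //]|h]; split => //.
apply/box_mem => i; apply: le_trans (abs_le_l1 x i) _; by case/andP: h.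
Qed.

Lemma BP_inP p x : x \in BP d p -> inPcirc x.
Proof. by rewrite BP_mem => /andP []. Qed.

Lemma phiS_BP s q p : phiS s q (BP d p) = BP d p.
Proof.
apply/eqP; rewrite eqEfcard (card_phiS _ _ (@BP_inP p)).
rewrite leqnn andbT; apply/fsubsetP => y /imfsetP [x /= hx ->].
rewrite BP_mem (inP_phi _ _ (BP_inP hx)) l1_phi /=.
by move: hx; rewrite BP_mem => /andP [].
Qed.

Lemma cs_BP_eq p i j : cs (BP d p) i = cs (BP d p) j.
Proof.
rewrite -{1}(phiS_BP (fun _ => false) (tperm i j) p) cs_phiS; last exact: BP_inP.
by rewrite tpermL.
Qed.

Lemma N_eq X : \sum_(x <- X) l1 x = \sum_(i < d) cs X i.
Proof. by rewrite /l1 /cs exchange_big. Qed.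

Lemma N_adm k X : admissible k X -> \sum_(x <- X) l1 x <= (k%:Z) *+ d.
Proof.
case=> _ hk; rewrite N_eq -[X in _ <= _ *+ X]card_ord -sumr_const.
apply: ler_sum => i _; exact: le_trans (cs_le_kappa X i) hk.
Qed.

Lemma N_BP p (i0 : 'I_d) : \sum_(x <- BP d p) l1 x = kappa (BP d p) *+ d.
Proof.
have hk : kappa (BP d p) = cs (BP d p) i0.
  apply/eqP; rewrite eq_le cs_le_kappa andbT; apply: kappa_le; last exact: cs_ge0.
  by move=> i; rewrite (cs_BP_eq p i i0).
rewrite N_eq hk -[X in _ = _ *+ X]card_ord -sumr_const.
by apply: eq_bigr => i _; apply: cs_BP_eq.
Qed.

Lemma counting p X : (forall x, x \in X -> inPcirc x) ->
  (#|` BP d p| <= #|` X|)%N ->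
  \sum_(x <- X) l1 x <= \sum_(x <- BP d p) l1 x -> X = BP d p.
Proof.
set B := BP d p => HX hcard hN.
set I := X `&` B.
have eD1 : X `\` (X `&` B) = X `\` B.
  by apply/fsetP => x; rewrite !(in_fsetD, in_fsetI); case: (x \in X); case: (x \in B).
have eD2 : B `\` (X `&` B) = B `\` X.
  by apply/fsetP => x; rewrite !(in_fsetD, in_fsetI); case: (x \in X); case: (x \in B).
have e1 := sum_sub (@l1 d) (fsubsetIl X B).
have e2 := sum_sub (@l1 d) (fsubsetIr X B).
rewrite eD1 in e1; rewrite eD2 in e2.
have c1 := cardfsID B X.
have c2 := cardfsID X B.
have h1 : (p.+1)%:Z *+ #|` X `\` B| <= \sum_(x <- X `\` B) l1 x.
  rewrite -sum_const !big_seq; apply: ler_sum => x.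
  rewrite in_fsetD => /andP [hxB hxX]; move: hxB; rewrite BP_mem HX //= -ltNge.
  move=> h; rewrite -addn1 PoszD; by rewrite lezD1.
have h2 : \sum_(x <- B `\` X) l1 x <= p%:Z *+ #|` B `\` X|.
  rewrite -sum_const !big_seq; apply: ler_sum => x.
  by rewrite in_fsetD BP_mem => /andP [_ /andP [_ ->]].
have : (p.+1)%:Z *+ #|` X `\` B| <= p%:Z *+ #|` B `\` X|.
  apply: le_trans h1 _; apply: le_trans _ h2.
  by rewrite -(lerD2r (\sum_(x <- X `&` B) l1 x)) -e1 -e2.
move/mulrn_le => h.
rewrite fsetIC in c2.
have hXB : #|` X `\` B| = 0%N by nia.
have hsub : X `<=` B.
  apply/fsubsetP => x hx; apply: contraT => hxB.
  have : x \in X `\` B by rewrite inE hxB hx.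
  by move/eqP: hXB; rewrite cardfs_eq0 => /eqP ->; rewrite inE.
apply/eqP; rewrite eqEfcard hsub /=; exact: hcard.
Qed.

End Sym.

Lemma sort_perm d (g : 'I_d -> int) :
  exists s : {perm 'I_d}, forall i j : 'I_d, (i <= j)%N -> g (s j) <= g (s i).
Proof.
pose r := fun u v : 'I_d => g v <= g u.
have rt : transitive r by move=> a b c hab hbc; rewrite /r; exact: le_trans hbc hab.
have rr : reflexive r by move=> a; rewrite /r.
have rtot : total r by move=> a b; rewrite /r le_total.
pose sq := sort r (enum 'I_d).
have psq : perm_eq sq (enum 'I_d) by rewrite perm_sort.
have usq : uniq sq by rewrite (perm_uniq psq) enum_uniq.
have ssq : size sq = d by rewrite (perm_size psq) size_enum_ord.
have hs : sorted r sq by apply: sort_sorted.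
pose f := fun i : 'I_d => nth i sq i.
have finj : injective f.
  move=> a b; rewrite /f => e.
  apply: val_inj => /=.
  have ha : (a < size sq)%N by rewrite ssq.
  have hb : (b < size sq)%N by rewrite ssq.
  rewrite (set_nth_default a b hb) in e.
  by apply/eqP; rewrite -(nth_uniq a ha hb usq) e.
exists (perm finj) => i j hij; rewrite !permE /f.
have hi : (i < size sq)%N by rewrite ssq.
have hj : (j < size sq)%N by rewrite ssq.
rewrite (set_nth_default i j hj).
have := sorted_leq_nth rt rr i hs; move/(_ i j hi hj hij); by [].
Qed.

Lemma periodic n (b : 'I_n.+1 -> int) (t : 'I_n.+1) :
  (forall i j : 'I_n.+1, (i <= j)%N -> b j <= b i) ->
  (forall l, b (l + t) = b l) -> t != 0 -> forall l, b l = b 0.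
Proof.
move=> hmono hper ht0.
suff H : forall m, (m < n.+1)%N -> b (inord m) = b 0.
  by move=> l; rewrite -(H l (ltn_ord l)) inord_val.
elim/ltn_ind => m IH hm.
case: (leqP m t) => hmt.
  apply/eqP; rewrite eq_le; apply/andP; split.
    by apply: hmono; rewrite /= inordK.
  have -> : b 0 = b t by rewrite -{1}(add0r t) hper.
  by apply: hmono; rewrite /= inordK.
have e : (inord m : 'I_n.+1) = inord (m - t) + t.
  apply: val_inj => /=; rewrite inordK // inordK; last lia.
  rewrite subnK; last lia. by rewrite modn_small.
have ht : (0 < t)%N.
  by rewrite lt0n; apply: contra ht0 => /eqP h; apply/eqP; apply/val_inj.
rewrite e hper; apply: IH; lia.
Qed.

Lemma gcd_const n (c : nat) : (\big[gcdn/0%N]_(i < n.+1) c)%N = c.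
Proof.
rewrite big_const_ord; elim: n => [|n IH] /=; first by rewrite gcdn0.
by move: IH => /= ->; rewrite gcdnn.
Qed.

Lemma orbit n (x : pt n.+1) : inPcirc x ->
  exists f : 'I_n.+1 -> pt n.+1, injective f /\ (forall j, exists s p, f j = phi s p x)
    /\ (forall i, \sum_(j < n.+1) `|f j i| = l1 x).
Proof.
case/andP => hprim _.
case: (boolP [exists i, `|x i| != `|x 0|]) => [/existsP [i0 hi0]|hc].
  case: (sort_perm (fun i => `|x i|)) => sg hsg.
  pose sh j : {perm 'I_n.+1} := perm (@addIr _ j).
  pose f j := phi (fun _ => false) (sh j * sg)%g x.
  have hf : forall j i, `|f j i| = `|x (sg (i + j))|.
    by move=> j i; rewrite abs_phi permM permE.
  pose b := fun i => `|x (sg i)|.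
  exists f; split; last split.
  - move=> j j' e.
    have hb : forall l, b (l + (j - j')) = b l.
      move=> l; have := congr1 (fun v : pt n.+1 => `|v (l - j')|) e.
      rewrite /= !hf /b subrK => <-.
      by rewrite [j - j']addrC addrA.
    case: (boolP (j - j' == 0)) => [|ht]; first by rewrite subr_eq0 => /eqP.
    have hconst := periodic (b := b) (fun i j h => hsg i j h) hb ht.
    have e1 : `|x i0| = b (sg^-1 i0)%g by rewrite /b permKV.
    have e2 : `|x 0| = b (sg^-1 0)%g by rewrite /b permKV.
    by exfalso; move: hi0; rewrite e1 e2 !hconst eqxx.
  - by move=> j; exists (fun _ => false), (sh j * sg)%g.
  - move=> i; rewrite (eq_bigr (fun j => b (i + j))); last by move=> j _; rewrite hf.
    have -> : \sum_(j < n.+1) b (i + j) = \sum_(j < n.+1) b j by rewrite [RHS](reindex_inj (addrI i)).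
    rewrite /b /l1 /=.
    by rewrite [RHS](reindex_inj (@perm_inj _ sg)).
have hc' : forall i, `|x i| = `|x 0|.
  move=> i; move: hc; rewrite negb_exists => /forallP /(_ i); by rewrite negbK => /eqP.
have h1 : forall i, `|x i| = 1.
  move=> i; rewrite hc'; move: hprim; rewrite /primitive.
  rewrite (eq_bigr (fun _ => absz (x 0))); last first.
    by move=> j _; move: (hc' j); rewrite -!abszE => -[].
  by rewrite gcd_const => /eqP h; rewrite -abszE h.
pose fl (j i : 'I_n.+1) := (i == j) && (j != 0).
pose v (j : 'I_n.+1) : pt n.+1 := [ffun i => if fl j i then -1 else 1].
pose s (j : 'I_n.+1) := fun i => (x i < 0) (+) fl j i.
have hv : forall j, phi (s j) 1%g x = v j.
  move=> j.
  have ht : tw (s j) 1%g x = v j.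
    apply/ffunP => i; rewrite !ffunE perm1 /s; have := h1 i.
    case: (fl j i); case: (ltrgtP (x i) 0) => /= hx; lia.
  have f0 : fl j 0 = false by rewrite /fl; case: eqP => // <-; rewrite eqxx.
  rewrite /phi ht /nf ifT //; apply/existsP; exists 0; rewrite ffunE f0 /=.
  by apply/forallP.
exists (fun j => v j); split; last split.
- move=> j j' e; apply/eqP; apply: contraT => hne.
  case: (boolP (j == 0)) => hj.
    have hj' : j' != 0 by apply: contra hne => /eqP ->.
    have := congr1 (fun w : pt n.+1 => w j') e; rewrite !ffunE /fl eqxx hj' (eqP hj) eqxx andbF /=.
    lia.
  have := congr1 (fun w : pt n.+1 => w j) e; rewrite !ffunE /fl eqxx hj (negbTE hne) /=.
  lia.
- by move=> j; exists (s j), 1%g; rewrite hv.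
- move=> i; rewrite /l1 (eq_bigr (fun _ => 1)); last by move=> j _; rewrite -hv abs_phi perm1 h1.
  by rewrite [RHS](eq_bigr (fun _ => 1)) // => j _; rewrite h1.
Qed.

Lemma ball n k (X : {fset pt n.+1}) : admissible k X ->
  (forall Y, admissible k Y -> #|` Y| = #|` X| -> Y = X) ->
  forall y z, inPcirc y -> y \notin X -> z \in X -> l1 z < l1 y.
Proof.
move=> hX Hu y z hy hyX hzX; rewrite ltNge; apply/negP => hle.
have inv : forall s p, phiS s p X = X.
  move=> s p; apply: Hu; first exact: adm_phiS.
  by apply: card_phiS; case: hX.
have hz : inPcirc z by case: hX => h _; apply: h.
case: (orbit hz) => fz [fzi [fzp fzs]].
case: (orbit hy) => fy [fyi [fyp fys]].
pose U := [fset fz j | j : 'I_n.+1].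
pose V := [fset fy j | j : 'I_n.+1].
apply: (exchange (U := U) (V := V) hX Hu).
- apply/fsubsetP => u /imfsetP [j _ ->]; case: (fzp j) => s [p ->].
  by rewrite -(inv s p); apply/imfsetP; exists z.
- by move=> v /imfsetP [j _ ->]; case: (fyp j) => s [p ->]; apply: inP_phi.
- move=> v /imfsetP [j _ ->]; case: (fyp j) => s [p ->].
  rewrite -(inv s p); apply/negP => /imfsetP [x /= hx e].
  have hxi : inPcirc x by case: hX => h _; apply: h.
  by move: hyX; rewrite (phi_inj hy hxi e) hx.
- by apply/fset0Pn; exists (fy 0); apply/imfsetP; exists 0.
- by rewrite !card_imfset.
  move=> i; rewrite /cs big_imfset; last by move=> a b _ _; apply: fzi.
  rewrite big_imfset; last by move=> a b _ _; apply: fyi.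
  have ez : \sum_(j <- enum 'I_n.+1) `|fz j i| = l1 z by rewrite enumT; exact: (fzs i).
  have ey : \sum_(j <- enum 'I_n.+1) `|fy j i| = l1 y by rewrite enumT; exact: (fys i).
  rewrite /= ez ey.
  have hk : cs X i <= k by apply: le_trans (cs_le_kappa X i) _; case: hX.
  move: hk hle; rewrite /cs => h1 h2; apply: le_trans h1; rewrite -addrA gerDl. by rewrite addrC subr_le0.
Qed.

Lemma fwd d k : (0 < d)%N -> (exists p, (0 < p)%N /\ k%:Z = kappa (BP d p)) ->
  exists! X : {fset pt d}, admissible k X /\ #|` X| = delta_z d k.
Proof.
move=> hd [p [hp hkp]].
pose i0 : 'I_d := Ordinal hd.
have hB : admissible k (BP d p) by split; [exact: BP_inP | rewrite hkp].
have key : forall X, admissible k X -> (#|` BP d p| <= #|` X|)%N -> X = BP d p.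
  move=> X hX hc; apply: counting => //; first by case: hX.
  by rewrite (N_BP p i0) -hkp; apply: N_adm.
case: (delta_attained d k) => X0 [h0 h0c].
have hc0 : (#|` BP d p| <= #|` X0|)%N by rewrite h0c; exact: le_delta hB.
have e0 := key X0 h0 hc0.
exists (BP d p); split; first by split => //; rewrite -e0.
move=> Y [hY hYc]; symmetry; apply: (key Y hY); rewrite hYc; exact: le_delta hB.
Qed.

Lemma max_in (T : eqType) (s : seq T) (F : T -> int) : s != [::] ->
  exists2 z, z \in s & forall x, x \in s -> F x <= F z.
Proof.
elim: s => [|a s IH] // _.
case: (eqVneq s [::]) => [->|hs].
  by exists a; rewrite ?inE // => x; rewrite inE => /eqP ->.
case: (IH hs) => z hz hmax.
case: (leP (F z) (F a)) => h.
  exists a; first by rewrite inE eqxx.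
  move=> x; rewrite inE => /orP [/eqP -> //|/hmax hx]; exact: le_trans hx h.
exists z; first by rewrite inE hz orbT.
move=> x; rewrite inE => /orP [/eqP -> |/hmax //]; exact: ltW.
Qed.

Section Conv.
Variable n : nat.
Definition pq (a : int) : pt n.+2 :=
  [ffun i : 'I_n.+2 => if val i == 0%N then 1 else if val i == 1%N then a else 0].

Lemma pq_inP a : inPcirc (pq a).
Proof.
apply/andP; split.
  rewrite /primitive (bigD1 ord0) //= ffunE /=; by rewrite gcd1n.
apply/existsP; exists ord0; rewrite ffunE /=; apply/forallP => j; by rewrite ?ltn0.

Qed.

Lemma l1_pq a : l1 (pq a) = 1 + `|a|.
Proof.
rewrite /l1 2!big_ord_recl big1 ?addr0 => [|i _]; rewrite !ffunE /=.
  by [].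
by [].
Qed.


Lemma cs1 (a : pt n.+2) i : cs [fset a] i = `|a i|.
Proof. by rewrite /cs big_seq_fset1. Qed.

Lemma conv k : (0 < k)%N ->
  (exists! X : {fset pt n.+2}, admissible k X /\ #|` X| = delta_z n.+2 k) ->
  exists p : nat, (0 < p)%N /\ k%:Z = kappa (BP n.+2 p).
Proof.
move=> hk [X [[hX hXc] hu]].
have Hu : forall Y, admissible k Y -> #|` Y| = #|` X| -> Y = X.
  by move=> Y hY hc; symmetry; apply: hu; rewrite hc.
have hXP : forall x, x \in X -> inPcirc x by case: hX.
have hne : X != fset0.
  apply/negP => /eqP h0.
  have hA : admissible k [fset pq 0].
    split; first by move=> x; rewrite in_fset1 => /eqP ->; exact: pq_inP.
    apply: kappa_le => [i|]; last by [].
    rewrite cs1 ffunE; apply: le_trans (_ : 1 <= k%:Z); last by rewrite lez_nat.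
    by case: ifP => //; case: ifP.
  by have := le_delta hA; rewrite -hXc h0 cardfs0 cardfs1.
have hne' : enum_fset X != [::].
  apply: contra hne => /eqP h; apply/eqP/fsetP => x; rewrite in_fset0.
  by apply/negbTE; rewrite -[x \in X]/(x \in enum_fset X) h.
case: (max_in (@l1 _) hne') => z0 hz0X hmax.
have hz0 : inPcirc z0 by apply: hXP.
have hl1 : 1 <= l1 z0.
  case/andP: hz0 => /prim_nz [i hi] _; apply: le_trans (abs_le_l1 z0 i).
  by rewrite -normr_gt0 in hi.
pose q := absz (l1 z0).
have hq : (q : int) = l1 z0 by rewrite /q abszE ger0_norm // (le_trans _ hl1).
have eX : X = BP n.+2 q.
  apply/fsetP => x; rewrite BP_mem hq; apply/idP/idP.
    by move=> hx; rewrite hXP //=; apply: hmax.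
  case/andP => hxp hxl; apply: contraT => hxX.
  have := ball hX Hu hxp hxX hz0X; rewrite ltNge hxl //.
exists q; split; first by rewrite -(ltz_nat 0 q) hq.
rewrite -eX; apply/eqP; rewrite eq_le; have [_ hkX] := hX; rewrite hkX andbT.
rewrite leNgt; apply/negP => hlt.
pose zq := pq (q%:Z - 1); pose yq := pq q%:Z.
have hzq : l1 zq = q by rewrite l1_pq ger0_norm; [rewrite addrC subrK | rewrite subr_ge0 hq].
have hyq : l1 yq = q%:Z + 1 by rewrite l1_pq addrC.
have zqX : zq \in X.
  apply: contraT => h; have := ball hX Hu (pq_inP _) h hz0X.
  by rewrite hzq hq ltxx.
have yqX : yq \notin X.
  apply/negP => h; have := hmax _ h; rewrite hyq hq; lia.
apply: (exchange (U := [fset zq]) (V := [fset yq]) hX Hu).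
- by rewrite fsub1set.
- by move=> v; rewrite in_fset1 => /eqP ->; exact: pq_inP.
- by move=> v; rewrite in_fset1 => /eqP ->.
- by apply/fset0Pn; exists yq; rewrite in_fset1.
- by rewrite !cardfs1.
move=> i; rewrite !cs1.
have hi := cs_le_kappa X i.
have hd : `|yq i| <= `|zq i| + 1.
  rewrite !ffunE; case: ifP => _; first by [].
  case: ifP => _; last by [].
  rewrite !ger0_norm //; [lia | rewrite subr_ge0 hq //].
move: hi hd hlt; lia.
Qed.

End Conv.

Unset Implicit Arguments.
Theorem theorem1p4 (d k : nat) (hd : (2 <= d)%N) (hk : (0 < k)%N) :
  (exists! X : {fset pt d}, admissible k X /\ #|` X| = delta_z d k) <->
  (exists p : nat, (0 < p)%N /\ k%:Z = kappa (BP d p)).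
Proof.
case: d hd => [|[|n]] // _; split; first exact: conv.
exact: fwd.
Qed.
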